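(* Let $T$ be a tree on $n$ vertices, with vertex set $\{1,\dots,n\}$, and fix vertices $r$ and $a$ of $T$ (not necessarily distinct). Then $$0\le 2\sum_{b=1}^n d_{r,P_{a,b}}\le n(n-1).$$ The upper bound is achieved if and only if $T$ is a path on $n$ vertices and $r$ and $a$ are its two end vertices; the lower bound is achieved if and only if $r=a$.
   Context: $P_{a,b}$ denotes the unique path in $T$ between $a$ and $b$ (when $a=b$ it is the single vertex $a$). $d_{r,P_{a,b}}$ is the distance in $T$ from $r$ to the vertex of $P_{a,b}$ closest to $r$. *)

(* Defs.v *)
From mathcomp Require Import all_boot.
Set Implicit Arguments. Unset Strict Implicit. Unset Printing Implicit Defensive.

Section Defs.
Variable T : finType.
Implicit Types (e : rel T) (x y r a b v : T).

(* A simple graph on T is a symmetric irreflexive relation e.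
   A tree: connected and acyclic (no cycle on >= 3 distinct vertices). *)
Definition connected_graph e : Prop := forall x y, connect e x y.
Definition acyclic_graph e : Prop :=
  forall p : seq T, uniq p -> 2 < size p -> ~~ cycle e p.
Definition is_tree e : Prop := connected_graph e /\ acyclic_graph e.

Definition walk e x y (p : seq T) : bool := path e x p && (last x p == y).

(* graph distance: least k such that a walk of length k from x to y exists
   (walks of length < #|T| suffice in a connected graph) *)
Definition dist e x y : nat :=
  find (fun k => [exists p : k.-tuple T, walk e x y p]) (iota 0 #|T|).

(* vertex set of P_{a,b}: vertices on a simple path (no repeated vertex)
   from a to b; in a tree this path is unique *)
Definition tree_path e a b : {set T} :=
  [set v | [exists k : 'I_#|T|, exists p : k.-tuple T,
             walk e a b p && uniq (a :: p) && (v \in a :: p)]].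

Definition dist_to_path e r a b : nat :=
  \big[minn/#|T|]_(v in tree_path e a b) dist e r v.

Definition path_graph_with_ends e r a : Prop :=
  exists s : seq T,
    [/\ uniq (r :: s), size (r :: s) = #|T|, last r s = a &
      forall x y, e x y <->
        exists i, i.+1 < size (r :: s) /\
          ((nth r (r :: s) i = x /\ nth r (r :: s) i.+1 = y) \/
           (nth r (r :: s) i = y /\ nth r (r :: s) i.+1 = x))].
End Defs.

(* Main.v *)
Require Import Defs.
From mathcomp Require Import all_boot zify.
Set Implicit Arguments. Unset Strict Implicit. Unset Printing Implicit Defensive.

Section Aux.
Variable T : finType.
Variable e : rel T.

Lemma find_leq (P : pred nat) s i : i < size s -> P (nth 0 s i) -> find P s <= i.
Proof.
move=> Hi HP; rewrite leqNgt; apply/negP => /(before_find 0); by rewrite HP.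
Qed.

Lemma dist_le_size x y : dist e x y <= #|T|.
Proof. by rewrite /dist; apply: leq_trans (find_size _ _) _; rewrite size_iota. Qed.

Lemma dist_le x y p : walk e x y p -> dist e x y <= size p.
Proof.
move=> W; case: (ltnP (size p) #|T|) => H; last by apply: leq_trans (dist_le_size _ _) H.
apply: find_leq; first by rewrite size_iota.
rewrite nth_iota // add0n; apply/existsP; exists (in_tuple p); exact: W.
Qed.

Lemma uniq_size_lt (x : T) (p : seq T) : uniq (x :: p) -> size p < #|T|.
Proof. move=> U; have := card_uniqP U; rewrite /= => <-; exact: max_card. Qed.

Lemma shorten_walk x y p : walk e x y p ->
  exists q, [/\ walk e x y q, uniq (x :: q) & size q <= size p].
Proof.
case/andP => P /eqP <-; case: (shortenP P) => q Pq Uq Sq.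
exists q; split => //; first by rewrite /walk Pq eqxx.
apply: uniq_leq_size => //; by case/andP: Uq.
Qed.

Hypothesis conn : connected_graph e.

Lemma dist_walk x y : exists p, [/\ walk e x y p, uniq (x :: p) & size p = dist e x y].
Proof.
have [p0 [W0 U0 _]] : exists p, [/\ walk e x y p, uniq (x :: p) & True].
  have /connectP [p P ->] := conn x y.
  have [q [Wq Uq _]] := @shorten_walk x (last x p) p (introT andP (conj P (eqxx _))).
  by exists q.
have Hh : has (fun k => [exists p : k.-tuple T, walk e x y p]) (iota 0 #|T|).
  apply/hasP; exists (size p0); first by rewrite mem_iota /= add0n (uniq_size_lt U0).
  by apply/existsP; exists (in_tuple p0).
have := nth_find 0 Hh; rewrite nth_iota -/(dist e x y); last first.
  by move: (find_size (fun k => [exists p : k.-tuple T, walk e x y p]) (iota 0 #|T|)); rewrite has_find size_iota in Hh *.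
rewrite add0n => /existsP [t Wt].
have [q [Wq Uq Sq]] := shorten_walk Wt.
exists q; split => //; apply/eqP; rewrite eqn_leq (dist_le Wq) andbT.
by rewrite -(size_tuple t).
Qed.

Lemma last_take x0 (x : T) p j : j <= size p -> last x (take j p) = nth x0 (x :: p) j.
Proof.
elim: p x j => [|y p IH] x [|j] //= H; exact: (IH y j H).
Qed.

Lemma last_drop x0 (x : T) p j : j <= size p -> last (nth x0 (x :: p) j) (drop j p) = last x p.
Proof.
elim: p x j => [|y p IH] x [|j] //= H; exact: (IH y j H).
Qed.

Lemma path_drop x0 (x : T) p j : j <= size p -> path e x p -> path e (nth x0 (x :: p) j) (drop j p).
Proof.
elim: p x j => [|y p IH] x [|j] //= H /andP [_ P]; exact: (IH y j H P).
Qed.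

Lemma walk_take x0 x y p j : walk e x y p -> j <= size p ->
  walk e x (nth x0 (x :: p) j) (take j p).
Proof.
case/andP => P _ H; by rewrite /walk take_path // (last_take x0) // eqxx.
Qed.

Lemma dist_edge x u v : e u v -> dist e x v <= (dist e x u).+1.
Proof.
move=> Euv; have [p [/andP [P /eqP L] _ S]] := dist_walk x u.
rewrite -S -(size_rcons p v); apply: dist_le.
by rewrite /walk rcons_path P L Euv last_rcons eqxx.
Qed.

Lemma tree_path_end a b : (a \in tree_path e a b) && (b \in tree_path e a b).
Proof.
have [p [W U _]] := dist_walk a b.
have H := uniq_size_lt U.
rewrite !inE; apply/andP; split; apply/existsP; exists (Ordinal H); apply/existsP;
  exists (in_tuple p); rewrite W U /=.
- by rewrite mem_head.
- by case/andP: W => _ /eqP <-; rewrite mem_last.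
Qed.

Lemma bigmin_le (A : {set T}) (F : T -> nat) d v : v \in A ->
  \big[minn/d]_(u in A) F u <= F v.
Proof.
move=> H; rewrite unlock.
have : v \in index_enum T by rewrite mem_index_enum.
elim: (index_enum T) => [|u r IH] //=; rewrite inE => /orP [/eqP <-|Hr].
  by rewrite H geq_minl.
case: (u \in A); last exact: IH.
by apply: leq_trans (geq_minr _ _) (IH Hr).
Qed.

Lemma bigmin_ge (A : {set T}) (F : T -> nat) d c : c <= d ->
  (forall v, v \in A -> c <= F v) -> c <= \big[minn/d]_(u in A) F u.
Proof.
move=> Hd H; elim/big_ind: _ => //; first by move=> m1 m2 H1 H2; rewrite leq_min H1.
Qed.

Lemma tree_path_aa a v : v \in tree_path e a a -> v = a.
Proof.
rewrite inE => /existsP [k /existsP [p /andP [/andP [/andP [P /eqP L] U] Hv]]].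
case: (tval p) P L U Hv => [|y q] /=; first by rewrite inE => _ _ _ /eqP.
move=> _ L /andP [Ha _]; exfalso; move: Ha; by rewrite -L mem_last.
Qed.

Lemma dist0 x y : dist e x y = 0 -> x = y.
Proof.
move=> H; have [p [/andP [_ /eqP L] _ S]] := dist_walk x y.
by case: p L S; rewrite // H.
Qed.

Lemma dist_refl x : dist e x x = 0.
Proof. apply/eqP; rewrite -leqn0; apply: (@dist_le _ _ [::]); by rewrite /walk /= eqxx. Qed.

End Aux.

Lemma sum_index (T : finType) (x0 : T) (s : seq T) : uniq s ->
  \sum_(b in s) index b s = \sum_(i < size s) i.
Proof.
move=> U; rewrite -big_uniq // (big_nth x0) big_mkord.
apply: eq_bigr => i _; by rewrite index_uniq.
Qed.

Lemma sum_id2 m : 2 * \sum_(i < m) i = m * (m - 1).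
Proof.
elim: m => [|m IH]; first by rewrite big_ord0.
rewrite big_ord_recr /= mulnDr IH; case: m {IH} => [|m] //=; rewrite !subn1 /=; nia.
Qed.

Lemma ivt (T : eqType) (e : rel T) (f : T -> nat) :
  (forall x y, e x y -> f x <= (f y).+1) ->
  forall q x j, path e x q -> f (last x q) <= j <= f x ->
  exists2 w, w \in x :: q & f w = j.
Proof.
move=> Hf; elim => [|y q IH] x j /=.
  move=> _ /andP [H1 H2]; exists x; rewrite ?mem_head //; apply/eqP; by rewrite eqn_leq H1 H2.
move=> /andP [Exy P] /andP [H1 H2].
case: (ltnP j (f x)) => Hj; last first.
  by exists x; rewrite ?mem_head //; apply/eqP; rewrite eqn_leq H2 Hj.
have Hy := Hf _ _ Exy.
have [|w Hw Hwj] := IH y j P; first by rewrite H1 /=; lia.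
by exists w => //; rewrite inE Hw orbT.
Qed.

Lemma key_arith N K X : K < N -> X = N * (N - 1) ->
  X <= K.+1 * K + 2 * ((N - K.+1) * K) -> N = K.+1.
Proof.
move=> H1 -> H2; have [c Hc] : exists c, N = c + K.+1 by exists (N - K.+1); lia.
subst N; rewrite addnK in H2; nia.
Qed.

Theorem lemma2p7 (n : nat) (e : rel 'I_n)
  (e_sym : symmetric e) (e_irr : irreflexive e) (e_tree : is_tree e)
  (r a : 'I_n) :
  [/\ 0 <= 2 * \sum_(b < n) dist_to_path e r a b,
      2 * \sum_(b < n) dist_to_path e r a b <= n * (n - 1),
      (2 * \sum_(b < n) dist_to_path e r a b = n * (n - 1)
         <-> path_graph_with_ends e r a)
    & (2 * \sum_(b < n) dist_to_path e r a b = 0 <-> r = a)].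
Proof.
case: e_tree => conn _.
set S := \sum_(b < n) _.
have fa b : dist_to_path e r a b <= dist e r a.
  by apply: bigmin_le; case/andP: (tree_path_end conn a b).
have fb b : dist_to_path e r a b <= dist e r b.
  by apply: bigmin_le; case/andP: (tree_path_end conn a b).
have [p [Wp Up Sp]] := dist_walk conn r a.
set k := dist e r a in fa Sp.
set s' := r :: p.
have Hsz : size s' = k.+1 by rewrite /= Sp.
have Hkn : k.+1 <= n.
  by rewrite -Hsz -(card_uniqP Up); apply: leq_trans (max_card _) _; rewrite card_ord.
have F2 j : j <= k -> dist e r (nth r s' j) = j.
  move=> Hj; apply/eqP; rewrite eqn_leq; apply/andP; split.
    have Hjp : j <= size p by lia.
    by apply: leq_trans (dist_le (walk_take r Wp Hjp)) _; rewrite size_takel.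
  have [w [/andP [Pw /eqP Lw] _ Sw]] := dist_walk conn r (nth r s' j).
  have W2 : walk e r a (w ++ drop j p).
    case/andP: Wp => Pp /eqP Lp.
    rewrite /walk cat_path Pw Lw last_cat Lw (last_drop r) ?Lp ?eqxx ?andbT; last lia.
    by apply: (path_drop r) => //; lia.
  have := dist_le W2; rewrite size_cat size_drop -Sw -/k; lia.
pose g b := if b \in s' then index b s' else k.
have fg b : dist_to_path e r a b <= g b.
  rewrite /g; case: ifP => Hb //.
  apply: leq_trans (fb b) _.
  have Hi : index b s' <= k by have := index_mem b s'; rewrite Hb Hsz; lia.
  by rewrite -{1}(nth_index r Hb) F2.
have Hg : 2 * \sum_(b < n) g b = k.+1 * k + 2 * ((n - k.+1) * k).
  rewrite (bigID (fun b => b \in s')) /= mulnDr.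
  have -> : \sum_(i < n | i \in s') g i = \sum_(i in s') index i s'.
    by apply: eq_bigr => i Hi; rewrite /g Hi.
  rewrite (sum_index r Up) Hsz sum_id2 subn1 /= mulnC.
  congr (_ + _); congr (2 * _).
  rewrite (eq_bigr (fun _ => k)); last by move=> i /negbTE Hi; rewrite /g Hi.
  rewrite sum_nat_const; congr (_ * _).
  have Hc := cardC (mem s'); rewrite card_ord (card_uniqP Up) Hsz in Hc.
  transitivity #|[predC s']|; first by apply: eq_card => i; rewrite !inE.
  rewrite -[in RHS]Hc addKn; by apply: eq_card.
have HS : 2 * S <= k.+1 * k + 2 * ((n - k.+1) * k).
  by rewrite -Hg leq_mul2l /= /S; apply: leq_sum => b _; exact: fg.
have Harith : k.+1 * k + 2 * ((n - k.+1) * k) <= n * (n - 1).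
  have [c ->] : exists c, n = c + k.+1 by exists (n - k.+1); lia.
  rewrite addnK; nia.
split => //.
- exact: leq_trans HS Harith.
- split.
  + move=> Heq.
    have Hn : n = k.+1 by apply: key_arith Hkn Heq HS.
    have allin b : b \in s'.
      apply/negPn/negP => Hb.
      have Ub : uniq (b :: s') by rewrite cons_uniq Hb Up.
      by have := uniq_size_lt Ub; rewrite card_ord Hsz Hn ltnn.
    exists p; split => //.
    * by rewrite card_ord Hsz.
    * by case/andP: Wp => _ /eqP.
    move=> x y; split.
    * move=> Exy.
      have Hi : index x s' <= k by have := index_mem x s'; rewrite allin Hsz.
      have Hj : index y s' <= k by have := index_mem y s'; rewrite allin Hsz.
      have Dx : dist e r x = index x s' by rewrite -{1}(nth_index r (allin x)) F2.
      have Dy : dist e r y = index y s' by rewrite -{1}(nth_index r (allin y)) F2.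
      have h1 := dist_edge conn r Exy.
      have Eyx : e y x by rewrite e_sym.
      have h2 := dist_edge conn r Eyx.
      have ij : index x s' != index y s'.
        apply/eqP => E.
        have Exy' : x = y by rewrite -(nth_index r (allin x)) -(nth_index r (allin y)) E.
        by rewrite Exy' e_irr in Exy.
      case: (ltngtP (index x s') (index y s')) => [Hlt|Hgt|E]; last by rewrite E eqxx in ij.
      - exists (index x s'); split; first by rewrite Hsz; lia.
        left; split; first exact: nth_index (allin x).
        have -> : (index x s').+1 = index y s' by lia.
        exact: nth_index (allin y).
      - exists (index y s'); split; first by rewrite Hsz; lia.
        right; split; first exact: nth_index (allin y).
        have -> : (index y s').+1 = index x s' by lia.
        exact: nth_index (allin x).
    * case=> i [Hi [[<- <-]|[<- <-]]]; case/andP: Wp => Pp _; move/(pathP r): Pp => Pp.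
      - by apply: Pp; rewrite Hsz Sp in Hi *.
      - by rewrite e_sym; apply: Pp; rewrite Hsz Sp in Hi *.
  + case=> s [Us Ss Ls Hs].
    set t := r :: s in Us Ss Hs.
    pose idx v := index v t.
    have allin v : v \in t.
      apply/negPn/negP => Hb.
      have Ub : uniq (v :: t) by rewrite cons_uniq Hb Us.
      by have := uniq_size_lt Ub; rewrite Ss ltnn.
    have Htn : size t = n by rewrite Ss card_ord.
    have Hedge x y : e x y -> (idx x = (idx y).+1) \/ (idx y = (idx x).+1).
      move=> /Hs [i [Hi [[E1 E2]|[E1 E2]]]]; rewrite -E1 -E2 /idx !index_uniq //; try lia; exact: ltnW Hi.
    have grow w x : path e x w -> idx (last x w) <= idx x + size w.
      elim: w x => [|y w IH] x /=; first by rewrite addn0.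
      case/andP => Exy P; have := IH y P; case: (Hedge _ _ Exy); lia.
    have distge v : idx v <= dist e r v.
      have [w [/andP [Pw /eqP Lw] _ Sw]] := dist_walk conn r v.
      have := grow w r Pw; rewrite Lw Sw /idx /= eqxx add0n; done.
    have idxa : idx a = n.-1.
      have -> : a = nth r t (size t).-1 by rewrite nth_last /= Ls.
      rewrite /idx index_uniq //; first by rewrite Htn.
    have Hf x y : e x y -> idx x <= (idx y).+1 by move=> /Hedge; lia.
    have idxlt v : idx v < n by rewrite -Htn /idx index_mem allin.
    have idxinj v w : idx v = idx w -> v = w.
      by move=> E; rewrite -(nth_index r (allin v)) -(nth_index r (allin w)) -/(idx v) E.
    have fge b : idx b <= dist_to_path e r a b.
      apply: bigmin_ge; first by rewrite card_ord; apply: ltnW.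
      move=> v Hv; apply: leq_trans (distge v); rewrite leqNgt; apply/negP => Hlt.
      have [q0 [Pq Lq Uq Hvq]] : exists q0 : seq 'I_n,
          [/\ path e a q0, last a q0 = b, uniq (a :: q0) & v \in a :: q0].
        move: Hv; rewrite inE => /existsP [kk /existsP [q /andP [/andP [/andP [Pq /eqP Lq] Uq] Hvq]]].
        by exists q.
      move: Hvq; rewrite inE => /orP [/eqP Eva|Hvq0].
        by move: Hlt; rewrite Eva idxa; have := idxlt b; lia.
      case/splitPr: Hvq0 Pq Lq Uq => q1 q2 Pq Lq Uq.
      rewrite cat_path /= in Pq; case/and3P: Pq => P1 Ev P2.
      have Prc : path e a (rcons q1 v) by rewrite rcons_path P1 Ev.
      have [|w Hw Hwb] := ivt Hf Prc (j := idx b).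
        by rewrite last_rcons (ltnW Hlt) idxa /=; have := idxlt b; lia.
      have Ewb := idxinj _ _ Hwb.
      rewrite -rcons_cons mem_rcons inE in Hw.
      case/orP: Hw => [/eqP Ewv|Hw]; first by move: Hlt; rewrite -Hwb Ewv ltnn.
      have Hbq2 : b \in q2.
        rewrite last_cat /= in Lq.
        have : b \in v :: q2 by rewrite -Lq mem_last.
        rewrite inE => /orP [/eqP Ebv|//]; by move: Hlt; rewrite Ebv ltnn.
      move: Uq; rewrite -cat_cons cat_uniq => /and3P [_ /negP H _]; apply: H.
      apply/hasP; exists b; first by rewrite inE Hbq2 orbT.
      by rewrite -Ewb.
    apply/eqP; rewrite eqn_leq (leq_trans HS Harith) /=.
    have : \sum_(b < n) idx b <= S by apply: leq_sum => b _; exact: fge.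
    have -> : \sum_(b < n) idx b = \sum_(b in t) index b t.
      by apply: eq_bigl => b; rewrite allin.
    rewrite (sum_index r Us) => H.
    have E := sum_id2 (size t).
    have Hx : size t * (size t - 1) = n * (n - 1) by rewrite Htn.
    by rewrite -Hx -E leq_mul2l H orbT.
- split.
  + move=> H0.
    have : dist_to_path e r a a <= S by rewrite /S (bigD1 a) //= leq_addr.
    have : dist e r a <= dist_to_path e r a a.
      apply: bigmin_ge; first exact: dist_le_size.
      by move=> v /tree_path_aa ->.
    move=> h1 h2; apply: (dist0 conn); rewrite -/k; lia.
  + move=> Era; have : S = 0.
      rewrite /S big1 // => b _; apply/eqP; rewrite -leqn0.
      by move: (fa b); rewrite /k Era dist_refl.
    by move=> ->.
Qed.
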